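(* Let $d\ge1$, let $\mathbf{e}_0=\mathbf{0}\in\mathbb{R}^d$ and $\mathbf{e}_1,\ldots,\mathbf{e}_d$ the standard unit basis vectors, let $\lambda\in[\frac{d}{d+1},1)$ and consider $S_i(\mathbf{x})=\lambda\mathbf{x}+(1-\lambda)\mathbf{e}_i$, $i=0,\ldots,d$, with attractor $X$. If $\mathbf{x}\in\mathrm{int}(X)$, then there exists a finite word $\mathbf{a}\in\mathcal{D}^*$ such that $T_{\mathbf{a}}(\mathbf{x})\in(0,1-\lambda]^d$.
   Context: $\mathcal{D}=\{0,\ldots,d\}$, $\mathcal{D}^*$ is the set of finite words over $\mathcal{D}$ (including the empty word). $X$ is the unique non-empty compact set with $X=\bigcup_{i=0}^dS_i(X)$. For $i\in\mathcal{D}$, $T_i(\mathbf{x})=\frac{\mathbf{x}-(1-\lambda)\mathbf{e}_i}{\lambda}$ is the inverse of $S_i$, and for $\mathbf{a}=a_1\cdots a_j\in\mathcal{D}^*$, $T_{\mathbf{a}}=T_{a_j}\circ\cdots\circ T_{a_1}$ (the identity for the empty word). *)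

(* Defs.v *)
From HB Require Import structures.
From mathcomp Require Import all_boot all_order all_algebra.
From mathcomp Require Import all_classical all_reals all_analysis.
Set Implicit Arguments. Unset Strict Implicit. Unset Printing Implicit Defensive.
Import Order.TTheory GRing.Theory Num.Theory.
Import numFieldNormedType.Exports.
Local Open Scope ring_scope.
Local Open Scope classical_set_scope.

(* e_0 = 0, e_i = i-th standard unit vector (i = 1..d), indexed by 'I_d.+1 *)
Definition evec (R : realType) (d : nat) (i : 'I_d.+1) : 'rV[R]_d :=
  \row_(j < d) (if (j.+1 == i :> nat) then 1 else 0).

Definition Smap (R : realType) (d : nat) (lam : R) (i : 'I_d.+1) (x : 'rV[R]_d)
  : 'rV[R]_d := lam *: x + (1 - lam) *: evec R i.

Definition Tmap (R : realType) (d : nat) (lam : R) (i : 'I_d.+1) (x : 'rV[R]_d)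
  : 'rV[R]_d := lam^-1 *: (x - (1 - lam) *: evec R i).

(* T_a = T_{a_j} o ... o T_{a_1} for a = a_1 ... a_j (identity for the empty word) *)
Definition Tword (R : realType) (d : nat) (lam : R) (a : seq 'I_d.+1) (x : 'rV[R]_d)
  : 'rV[R]_d := foldl (fun y i => Tmap lam i y) x a.

Definition is_attractor (R : realType) (d : nat) (lam : R) (X : set 'rV[R]_d) : Prop :=
  X !=set0 /\ compact X /\ X = \bigcup_(i in [set: 'I_d.+1]) (Smap lam i @` X).

(* Main.v *)
Require Import Defs.
From HB Require Import structures.
From mathcomp Require Import all_boot all_order all_algebra.
From mathcomp Require Import all_classical all_reals all_analysis.
From mathcomp Require Import lra ring.
Import Order.TTheory GRing.Theory Num.Theory.
Import numFieldNormedType.Exports.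
Local Open Scope ring_scope.
Local Open Scope classical_set_scope.

Set Implicit Arguments. Unset Strict Implicit.
Section H.
Variables (R : realType) (d : nat).

Lemma entry_le_norm (v : 'rV[R]_d) i : `|v ord0 i| <= `|v|.
Proof.
have /mapP[j Hj ->] : `|v ord0 i| \in [seq `|v x.1 x.2| | x : 'I_1 * 'I_d].
  by apply/mapP; exists (ord0, i) => //=; rewrite mem_enum.
by rewrite [leRHS]/Num.Def.normr /= mx_normrE; apply/bigmax_geP; right => /=; exists j.
Qed.

Lemma norm_le_entries (v : 'rV[R]_d) c : 0 <= c ->
  (forall i, `|v ord0 i| <= c) -> `|v| <= c.
Proof.
move=> c0 h; rewrite [leLHS]/Num.Def.normr /= mx_normrE (bigmax_le _ c0) //= => -[i j] _.
by rewrite (ord1 i); apply: h.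
Qed.

Lemma bernoulli (m : R) n : 1 <= m -> 1 + n%:R * (m - 1) <= m ^+ n.
Proof.
move=> m1; elim: n => [|n IH]; first by rewrite expr0 mul0r addr0.
rewrite exprS -natr1.
have h0 : 1 <= m ^+ n by apply: exprn_ege1.
nra.
Qed.

Lemma evecE (i : 'I_d.+1) k : evec R i ord0 k = if k.+1 == i :> nat then 1 else 0.
Proof. by rewrite mxE. Qed.

Lemma sum_evec_lift (j : 'I_d) : \sum_k evec R (lift ord0 j) ord0 k = 1.
Proof.
rewrite (eq_bigr (fun k => if k == j then 1 else 0)); last first.
  by move=> k _; rewrite evecE lift0 eqSS.
by rewrite -big_mkcond big_pred1_eq.
Qed.

Lemma sum_evec_le (i : 'I_d.+1) : \sum_k evec R i ord0 k <= 1.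
Proof.
case: (unliftP ord0 i) => [j ->|->]; first by rewrite sum_evec_lift.
rewrite big1 // => k _; by rewrite evecE.
Qed.

Lemma sum_ge_entry (y : 'rV[R]_d) j : (forall k, 0 <= y ord0 k) ->
  y ord0 j <= \sum_k y ord0 k.
Proof.
move=> h; rewrite (bigD1 j) //= lerDl; apply: sumr_ge0 => k _; exact: h.
Qed.
End H.
Set Implicit Arguments. Unset Strict Implicit.
Section H2.
Variables (R : realType) (d : nat).

Lemma attr_le (lam : R) (X : set 'rV[R]_d) (f : 'rV[R]_d -> R) m :
 0 <= lam -> lam < 1 -> is_attractor lam X ->
 (forall i y, f (Smap lam i y) = lam * f y + (1 - lam) * f (evec R i)) ->
 (forall i, f (evec R i) <= m) ->
 (exists B, forall y, X y -> f y <= B) ->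
 forall y, X y -> f y <= m.
Proof.
move=> l0 l1 [[y0 Xy0] [_ XE]] fS fe [B hB].
set E := f @` X.
have hs : has_sup E.
  split; first by exists (f y0), y0.
  by exists B => _ [y Xy <-]; exact: hB.
have ub := sup_upper_bound hs.
have key : sup E <= lam * sup E + (1 - lam) * m.
  apply: ge_sup; first by case: hs.
  move=> _ [y Xy <-]; move: Xy; rewrite {1}XE => -[i _ [z Xz <-]].
  rewrite fS; apply: lerD.
    by apply: ler_wpM2l => //; apply: ub; exists z.
  by apply: ler_wpM2l; [rewrite subr_ge0 ltW|exact: fe].
have sm : sup E <= m by nra.
by move=> y Xy; apply: le_trans sm; apply: ub; exists y.
Qed.

Lemma attr_bounded (lam : R) (X : set 'rV[R]_d) : is_attractor lam X ->
  exists M, forall y, X y -> `|y| <= M.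
Proof.
move=> [_ [cX _]]; case: (compact_bounded cX) => M [_ HM].
by exists (M + 1) => y Xy; apply: (HM (M+1)) => //; rewrite ltrDl.
Qed.

Lemma attr_simplex (lam : R) (X : set 'rV[R]_d) :
 0 <= lam -> lam < 1 -> is_attractor lam X ->
 forall y, X y -> (forall k, 0 <= y ord0 k) /\ \sum_k y ord0 k <= 1.
Proof.
move=> l0 l1 hX; have [M hM] := attr_bounded hX.
move=> y Xy; split.
  move=> k; rewrite -oppr_le0.
  apply: (@attr_le lam X (fun y => - y ord0 k) 0 l0 l1 hX) => //.
  - by move=> i z; rewrite !mxE; ring.
  - by move=> i; rewrite evecE; case: ifP => _; lra.
  - exists M => z Xz /=; apply: le_trans (hM _ Xz).
    by have := entry_le_norm z k; have := ler_norm (- z ord0 k); rewrite normrN; lra.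
apply: (@attr_le lam X (fun y => \sum_k y ord0 k) 1 l0 l1 hX) => //.
- move=> i z; rewrite /Smap.
  rewrite (eq_bigr (fun k => lam * z ord0 k + (1 - lam) * evec R i ord0 k)); last first.
    by move=> k _; rewrite !mxE.
  by rewrite big_split /= -!mulr_sumr.
- by move=> i; apply: sum_evec_le.
- exists (\sum_(k < d) M) => z Xz; apply: ler_sum => k _.
  by have := hM _ Xz; have := entry_le_norm z k; have := ler_norm (z ord0 k); lra.
Qed.
End H2.
Section H3.
Variables (R : realType) (d : nat).

Lemma Tmap_entry (lam : R) (j : 'I_d) (y : 'rV[R]_d) k :
  Tmap lam (lift ord0 j) y ord0 k = lam^-1 * (y ord0 k - (1 - lam) * (if k == j then 1 else 0)).
Proof. by rewrite !mxE lift0 eqSS. Qed.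

Lemma Tmap_sum (lam : R) (j : 'I_d) (y : 'rV[R]_d) :
  \sum_k Tmap lam (lift ord0 j) y ord0 k = lam^-1 * (\sum_k y ord0 k - (1 - lam)).
Proof.
rewrite (eq_bigr (fun k => lam^-1 * (y ord0 k - (1 - lam) * evec R (lift ord0 j) ord0 k))).
  by rewrite -mulr_sumr sumrB -mulr_sumr sum_evec_lift mulr1.
by move=> k _; rewrite !mxE.
Qed.

Lemma main_ind (lam : R) (hl0 : 0 < lam) (hl1 : lam < 1) n : forall y : 'rV[R]_d,
  (forall k, 0 < y ord0 k) -> \sum_k y ord0 k < 1 ->
  1 <= (1 - \sum_k y ord0 k) * (lam^-1) ^+ n ->
  exists a : seq 'I_d.+1, forall j : 'I_d, 0 < Tword lam a y ord0 j <= 1 - lam.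
Proof.
elim: n => [|n IH] y ypos ysum ht.
all: case: (pselect (forall j, y ord0 j <= 1 - lam)) => [hall|].
1,3: by exists [::] => j /=; rewrite ypos hall.
all: move=> /existsNP [j /negP]; rewrite -ltNge => hj.
all: have hge := @sum_ge_entry _ _ y j (fun k => ltW (ypos k)).
  by move: ht; rewrite expr0 mulr1; lra.
set y' := Tmap lam (lift ord0 j) y.
have hi : 0 < lam^-1 by rewrite invr_gt0.
have hii : lam * lam^-1 = 1 by rewrite mulfV // gt_eqF.
have [a ha] : exists a : seq 'I_d.+1, forall j : 'I_d, 0 < Tword lam a y' ord0 j <= 1 - lam.
  apply: IH.
  - move=> k; rewrite /y' Tmap_entry; apply: mulr_gt0 => //.
    case: eqP => [->|_]; have := ypos k; lra.
  - rewrite /y' Tmap_sum.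
    have h1 : \sum_k y ord0 k - (1 - lam) < lam by lra.
    have h2 : lam^-1 * (\sum_k y ord0 k - (1 - lam)) < lam^-1 * lam by rewrite ltr_pM2l.
    by rewrite mulVf ?gt_eqF in h2.
  - rewrite /y' Tmap_sum; move: ht; rewrite exprS.
    suff -> : 1 - lam^-1 * (\sum_k y ord0 k - (1 - lam)) = (1 - \sum_k y ord0 k) * lam^-1.
      by rewrite mulrA.
    set s := \sum_k y ord0 k.
    have -> : 1 = lam^-1 * lam by rewrite mulrC hii.
    ring.
by exists (lift ord0 j :: a).
Qed.
End H3.

Theorem lemma4p5 (R : realType) (d : nat) (lam : R) (X : set 'rV[R]_d)
  (hd : (1 <= d)%N)
  (hlam1 : d%:R / d.+1%:R <= lam) (hlam2 : lam < 1)
  (hX : is_attractor lam X)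
  (x : 'rV[R]_d) (hx : interior X x) :
  exists a : seq 'I_d.+1,
    forall j : 'I_d, 0 < Tword lam a x ord0 j <= 1 - lam.
Proof.
have hl0 : 0 < lam.
  by apply: lt_le_trans hlam1; apply: divr_gt0; rewrite ltr0n.
have simp := attr_simplex (ltW hl0) hlam2 hX.
move: hx => /nbhs_ballP [e e0 hb].
have he2 : 0 < e / 2 by rewrite divr_gt0.
have nev : forall k : 'I_d, `|evec R (lift ord0 k)| <= 1.
  move=> k; apply: norm_le_entries => // i; rewrite evecE.
  by case: ifP => _; rewrite ?normr1 ?normr0.
have inb : forall v : 'rV[R]_d, `|v| <= 1 -> X (x + (e/2) *: v).
  move=> v hv; apply: hb; rewrite -ball_normE /=.
  rewrite opprD addrA subrr add0r normrN normrZ gtr0_norm //.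
  have := normr_ge0 v; nra.
have xpos : forall k, 0 < x ord0 k.
  move=> k; have := inb (- evec R (lift ord0 k)); rewrite normrN => /(_ (nev k)).
  move=> /simp [/(_ k) + _]; rewrite !mxE lift0 eqxx; lra.
have xsum : \sum_k x ord0 k < 1.
  have := inb (evec R (lift ord0 (Ordinal hd))) (nev _) => /simp [_].
  rewrite (eq_bigr (fun k => x ord0 k + e / 2 * evec R (lift ord0 (Ordinal hd)) ord0 k)); last first.
    by move=> k _; rewrite !mxE.
  rewrite big_split /= -mulr_sumr sum_evec_lift; lra.
set t := 1 - \sum_k x ord0 k.
have t0 : 0 < t by rewrite /t; lra.
set mu := lam^-1.
have mu1 : 1 < mu by rewrite /mu invf_gt1.
set c := (t^-1 - 1) / (mu - 1).
have tV1 : 1 <= t^-1.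
  rewrite invf_ge1 // /t; have : 0 <= \sum_k x ord0 k by apply: sumr_ge0 => k _; exact: ltW.
  lra.
have c0 : 0 <= c by rewrite /c divr_ge0 // subr_ge0 // ltW.
have hn := archi_boundP c0.
apply: (@main_ind R d lam hl0 hlam2 (Num.bound c) x xpos xsum).
rewrite -/t -/mu.
have hb1 := bernoulli (Num.bound c) (ltW mu1).
have hc : c * (mu - 1) = t^-1 - 1 by rewrite /c divfK // gt_eqF // subr_gt0.
have : t^-1 <= mu ^+ Num.bound c by nra.
move=> h; have := ler_wpM2l (ltW t0) h; rewrite mulfV ?gt_eqF //.
Qed.
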